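(* In a black-white array (BWA) maintained by Insert and Delete operations, consider a demote operation of a segment of rank $i$. Its outcome is one of the following two. (1) If the segment of rank $i-1$ was inactive, the result is a new active segment of rank $i-1$ with occupancy rate $100\%$. (2) If the segment of rank $i-1$ was active, the result, after the merge with the segment of rank $i-1$, is a new segment of rank $i$ with occupancy rate strictly greater than $75\%$.
   Context: A black-white array (BWA) of size $N=2^K$ stores values from a totally ordered set. It has a white array $W[1..N-1]$ and a black array $B[1..N/2-1]$. For $i\ge0$, the segment of rank $i$ is the block of indices $[2^i,2^{i+1}-1]$, of size $2^i$. A state variable $\mathtt{total}$ counts stored entries, including VOID entries. The segment of rank $i$ is active iff bit $i$ of $\mathtt{total}$ is $1$. Between operations, the stored values are in the active white segments, each sorted. Insert$(v)$: if rank 0 is inactive, set $W[1]=v$; otherwise set $B[1]=v$ and perform $\mathrm{merge}(0)$. $\mathrm{merge}(i)$: merge the white and black segments of rank $i$. The sorted result goes into the white rank-$(i+1)$ segment if that segment is inactive. Otherwise it goes into the black rank-$(i+1)$ segment, followed by $\mathrm{merge}(i+1)$. An occupancy vector $V$ records, for each rank $i$, the number $V[i]$ of non-VOID values in the white segment of rank $i$. The occupancy rate of a segment is the number of its non-VOID values divided by its size. Delete$(v)$: search for $v$. If it is found at an index in the white segment of rank $i$, replace that entry by a special value VOID and decrement $V[i]$. If now $V[i]\le 2^{i-1}$ (half the segment size), perform demote$(i)$. Demote$(i)$: copy all non-VOID values of the white rank-$i$ segment into the rank-$(i-1)$ segment. They go to the white array if rank $i-1$ is inactive. If rank $i-1$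 is active, they go to the black array, followed by a merge of the black and white rank-$(i-1)$ segments into the white segment of rank $i$. The state variables are updated accordingly. *)

(* Defs.v *)
From HB Require Import structures.
From mathcomp Require Import all_boot all_order all_algebra.

Set Implicit Arguments.
Unset Strict Implicit.
Unset Printing Implicit Defensive.

Import Order.TTheory GRing.Theory Num.Theory.

Section BWA.
Variables (d : Order.disp_t) (T : orderType d).

Definition entry := option T.
Definition VOID : entry := None.

Definition entry_le (x y : entry) : bool :=
  match x, y with
  | None, _ => true
  | Some _, None => false
  | Some a, Some b => (a <= b)%O
  end.

Definition merge_seg (s1 s2 : seq entry) : seq entry := path.merge entry_le s1 s2.

(* State of a BWA: the counter [total] (stored entries, VOIDs included) and
   the white array, given segment by segment: [white i] is the content of the
   white segment of rank i (indices [2^i, 2^(i+1)-1]). The black array is only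
   used transiently inside operations and is represented by local values. *)
Record bwa := BWA { total : nat; white : nat -> seq entry }.

Definition active (s : bwa) (i : nat) : bool := odd (total s %/ 2 ^ i).

Definition V (s : bwa) (i : nat) : nat := count (fun x : entry => x != VOID) (white s i).

Definition occupancy (s : bwa) (i : nat) : rat := (V s i)%:R / (2 ^ i)%:R.

Definition upd (W : nat -> seq entry) (i : nat) (x : seq entry) : nat -> seq entry :=
  fun j => if j == i then x else W j.

(* merge cascade: [blk] is the black segment of rank i (for i = 0 it is B[1]).
   If rank i is inactive, blk becomes the white segment of rank i (for i = 0,
   this is "W[1] = v"); otherwise white and black rank-i segments are merged
   and the result is the black segment of rank i+1, and we continue.
   [fuel] only ensures termination (the cascade length is bounded by tot). *)
Fixpoint merge_up (fuel i tot : nat) (W : nat -> seq entry) (blk : seq entry)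
  : nat -> seq entry :=
  match fuel with
  | 0 => W
  | fuel'.+1 =>
      if odd (tot %/ 2 ^ i)
      then merge_up fuel' i.+1 tot (upd W i [::]) (merge_seg (W i) blk)
      else upd W i blk
  end.

Definition insert (s : bwa) (v : T) : bwa :=
  BWA (total s).+1 (merge_up (total s).+1 0 (total s) (white s) [:: Some v]).

Definition void_at (s : bwa) (i p : nat) : bwa :=
  BWA (total s) (upd (white s) i (set_nth VOID (white s i) p VOID)).

Definition compact (m : nat) (seg : seq entry) : seq entry :=
  let vals := filter (fun x : entry => x != VOID) seg in
  nseq (m - size vals) VOID ++ vals.

(* For i >= 1: copy the non-VOID values of the white rank-i segment
   into the rank-(i-1) segment: into the white array if rank i-1 is inactive,
   otherwise into the black array followed by a merge of black and white
   rank-(i-1) segments into the white segment of rank i.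
   For i = 0 (the segment holds no value any more) the segment simply
   becomes inactive. *)
Definition demote (s : bwa) (i : nat) : bwa :=
  match i with
  | 0 => BWA (total s).-1 (upd (white s) 0 [::])
  | j.+1 =>
      let cp := compact (2 ^ j) (white s i) in
      if active s j then
        BWA (total s - 2 ^ j) (upd (upd (white s) j [::]) i (merge_seg (white s j) cp))
      else
        BWA (total s - 2 ^ j) (upd (upd (white s) i [::]) j cp)
  end.

(* Demote is triggered when V[i] <= 2^(i-1), i.e. 2 * V[i] <= 2^i. *)
Definition demote_triggered (s : bwa) (i : nat) : bool := (V s i).*2 <= 2 ^ i.

Definition delete_at (s : bwa) (i p : nat) : bwa :=
  let s1 := void_at s i p in
  if demote_triggered s1 i then demote s1 i else s1.

Definition empty_bwa : bwa := BWA 0 (fun _ => [::]).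

(* States of a BWA of size N = 2^K reachable by Insert and Delete operations.
   Insert is possible as long as the N-1 white cells are not exhausted.
   Delete(v) searches v; any occurrence found in an active white segment may
   be the one the search returns (deleting an absent value changes nothing). *)
Inductive reachable (K : nat) : bwa -> Prop :=
  | reach_empty : reachable K empty_bwa
  | reach_insert s v : reachable K s -> (total s).+1 < 2 ^ K ->
      reachable K (insert s v)
  | reach_delete s i p v : reachable K s -> active s i ->
      nth VOID (white s i) p = Some v -> reachable K (delete_at s i p).

End BWA.

(* Main.v *)
Require Import Defs.
From mathcomp Require Import all_boot all_order all_algebra zify lra.
Import GRing.Theory Num.Theory.
Set Implicit Arguments.
Unset Strict Implicit.

Lemma L1 x r j k : r < 2 ^ j -> j <= k -> (x * 2 ^ j + r) %/ 2 ^ k = x %/ 2 ^ (k - j).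
Proof.
move=> hr hk; rewrite -(subnKC hk) expnD divnMA divnMDl ?expn_gt0 //.
rewrite (divn_small hr) addn0; congr (_ %/ 2 ^ _); lia.
Qed.

Lemma L2 x r j k : k < j -> odd ((x * 2 ^ j + r) %/ 2 ^ k) = odd (r %/ 2 ^ k).
Proof.
move=> hk; rewrite -(subnKC (ltnW hk)) expnD (mulnC (2 ^ k)) mulnA divnMDl ?expn_gt0 //.
rewrite oddD oddM oddX /=.
have -> : (j - k == 0) = false by apply/eqP; lia.
by rewrite andbF.
Qed.

Lemma bit_decomp n j : n = (n %/ 2 ^ j) * 2 ^ j + n %% 2 ^ j /\ n %% 2 ^ j < 2 ^ j.
Proof. by split; [apply: divn_eq | rewrite ltn_pmod ?expn_gt0]. Qed.

Lemma sub1_hi a m : odd (a %/ 2) -> 2 <= m -> (a - 1) %/ 2 ^ m = a %/ 2 ^ m.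
Proof.
move=> ha hm.
have e1 : a = (a %/ 4) * 2 ^ 2 + a %% 4 by rewrite /= [LHS](divn_eq a 4).
have e2 : a - 1 = (a %/ 4) * 2 ^ 2 + (a %% 4 - 1) by rewrite /=; lia.
rewrite e2 [in RHS]e1 !L1 //=; lia.
Qed.

Lemma add1_hi a m : ~~ odd a -> 1 <= m -> (a + 1) %/ 2 ^ m = a %/ 2 ^ m.
Proof.
move=> ha hm.
have e1 : a = (a %/ 2) * 2 ^ 1 + 0 by rewrite /=; lia.
have e2 : a + 1 = (a %/ 2) * 2 ^ 1 + 1 by rewrite /=; lia.
rewrite e2 [in RHS]e1 !L1 //=; lia.
Qed.
Section S.
Variables (d : Order.disp_t) (T : orderType d).

Definition nvp := (fun x : entry T => x != VOID T).

Definition Inv (s : bwa T) := forall k, active s k -> 2 ^ k < (V s k).*2.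

Lemma cnt_merge (a b : seq (entry T)) :
  count nvp (merge_seg a b) = count nvp a + count nvp b.
Proof.
have hp : perm_eq (merge_seg a b) (a ++ b) by apply/permPl; apply: perm_merge.
by rewrite (permP hp) count_cat.
Qed.

Lemma cnt_compact m (a : seq (entry T)) : count nvp (compact m a) = count nvp a.
Proof.
rewrite /compact count_cat count_nseq /= mul0n add0n count_filter.
by apply: eq_count => x /=; rewrite andbb.
Qed.

Lemma cnt_void (a : seq (entry T)) p v : nth (VOID T) a p = Some v ->
  count nvp (set_nth (VOID T) a p (VOID T)) = (count nvp a).-1 /\ 0 < count nvp a.
Proof.
move=> h.
have hp : p < size a.
  by rewrite ltnNge; apply/negP => hp; move: h; rewrite nth_default.
rewrite count_set_nthF //= h /= addn0 subn1; split=> //.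
rewrite -has_count; apply/hasP; exists (Some v) => //.
by rewrite -h mem_nth.
Qed.

Lemma merge_up_inv tot : forall fuel i (W : nat -> seq (entry T)) blk,
  tot %% 2 ^ i = 2 ^ i - 1 ->
  (forall k, i <= k -> odd (tot %/ 2 ^ k) -> 2 ^ k < (count nvp (W k)).*2) ->
  2 ^ i < (count nvp blk).*2 ->
  (exists k, i <= k < i + fuel /\ ~~ odd (tot %/ 2 ^ k)) ->
  forall k, odd (tot.+1 %/ 2 ^ k) ->
    2 ^ k < (count nvp (merge_up fuel i tot W blk k)).*2.
Proof.
elim=> [|fuel IH] i W blk h1 h2 h3 [k0 [hk0 hk0']].
  lia.
have [a ha] : exists a, a = tot %/ 2 ^ i by eexists.
have pe : 0 < 2 ^ i by rewrite expn_gt0.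
have et : tot = a * 2 ^ i + (2 ^ i - 1) by rewrite ha -h1 -divn_eq.
rewrite /=; case: ifP => hodd.
  apply: IH.
  - have -> : tot = (a %/ 2) * 2 ^ i.+1 + (2 ^ i.+1 - 1).
      rewrite et expnS; move: hodd; rewrite -ha => hodd.
      have -> : a = (a %/ 2) * 2 + 1 by lia.
      nia.
    rewrite modnMDl modn_small //.
    have : 0 < 2 ^ i.+1 by rewrite expn_gt0.
    lia.
  - move=> k hk hk'; rewrite /upd.
    case: (@eqP _ k i) => [e|_]; first lia.
    by apply: (h2) => //; lia.
  - rewrite cnt_merge expnS.
    have := h2 i (leqnn _) hodd. lia.
  - exists k0; split=> //.
    have : k0 != i by apply/eqP => e; move: hodd hk0'; rewrite e => ->.
    lia.
move=> k hk; rewrite /upd.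
have et1 : tot.+1 = (a + 1) * 2 ^ i + 0 by rewrite et; lia.
case: (ltngtP k i) => hki.
- by move: hk; rewrite et1 L2 // div0n.
- case: (@eqP _ k i) => [e|_]; first lia.
  apply: (h2); first lia.
  move: hk; rewrite et1 L1 //; last lia.
  rewrite et L1; try lia.
  rewrite add1_hi //; try lia.
  all: try by rewrite ha hodd.
- by rewrite hki; case: (@eqP _ i i).
Qed.

End S.

Lemma bits_sub tot j : odd (tot %/ 2 ^ j.+1) ->
  [/\ forall k, k < j -> odd ((tot - 2 ^ j) %/ 2 ^ k) = odd (tot %/ 2 ^ k),
      forall k, j.+1 < k -> odd ((tot - 2 ^ j) %/ 2 ^ k) = odd (tot %/ 2 ^ k),
      odd ((tot - 2 ^ j) %/ 2 ^ j) = ~~ odd (tot %/ 2 ^ j) &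
      odd ((tot - 2 ^ j) %/ 2 ^ j.+1) = odd (tot %/ 2 ^ j)].
Proof.
have [a ha] : exists a, a = tot %/ 2 ^ j by eexists.
have [r hr] : exists r, r = tot %% 2 ^ j by eexists.
have pe : 0 < 2 ^ j by rewrite expn_gt0.
have rlt : r < 2 ^ j by rewrite hr ltn_pmod.
have et : tot = a * 2 ^ j + r by rewrite ha hr -divn_eq.
rewrite et L1 // subSnn expn1 => ha2.
have a1 : 1 <= a by lia.
have et' : a * 2 ^ j + r - 2 ^ j = (a - 1) * 2 ^ j + r.
  rewrite mulnBl mul1n; have : 2 ^ j <= a * 2 ^ j by rewrite leq_pmull.
  lia.
rewrite et'; split.
- by move=> k hk; rewrite !L2.
- move=> k hk; rewrite !L1; try lia.
  rewrite sub1_hi //; lia.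
- rewrite !L1 // subnn expn0; lia.
- rewrite !L1 // subSnn subnn expn0 expn1; lia.
Qed.

Section S2.
Variables (d : Order.disp_t) (T : orderType d).

Lemma upd_same (W : nat -> seq (entry T)) i x : upd W i x i = x.
Proof. by rewrite /upd; case: (@eqP _ i i). Qed.

Lemma upd_other (W : nat -> seq (entry T)) i x j : j != i -> upd W i x j = W j.
Proof. by move=> h; rewrite /upd; case: (@eqP _ j i) => // e; rewrite e eqxx in h. Qed.

Lemma key_V (s : bwa T) i p v : Inv s -> active s i -> nth (VOID T) (white s i) p = Some v ->
  0 < i -> demote_triggered (void_at s i p) i -> V (void_at s i p) i = 2 ^ i.-1.
Proof.
move=> hI ha hn hi; rewrite /demote_triggered /V /= upd_same.
have [-> h0] := cnt_void hn.
move: h0 (hI i ha); rewrite /V.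
case: i hi {ha hn} => // j _ /=; rewrite expnS.
change (fun x : entry T => x != VOID T) with (@nvp _ T); lia.
Qed.

End S2.

Section S3.
Variables (d : Order.disp_t) (T : orderType d).

Lemma VE (s : bwa T) i : V s i = count (@nvp _ T) (white s i).
Proof. by []. Qed.

Lemma inv_empty : Inv (empty_bwa T).
Proof. by move=> k; rewrite /active /= div0n. Qed.

Lemma inv_insert (s : bwa T) v : Inv s -> Inv (insert s v).
Proof.
move=> hI.
have h1 : Defs.total s %% 2 ^ 0 = 2 ^ 0 - 1 by rewrite expn0 modn1.
have h2 : forall k, 0 <= k -> odd (Defs.total s %/ 2 ^ k) -> 2 ^ k < (count (@nvp _ T) (white s k)).*2.
  by move=> j _ hj; apply: hI.
have h3 : 2 ^ 0 < (count (@nvp _ T) [:: Some v]).*2 by [].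
have h4 : exists k, 0 <= k < 0 + (Defs.total s).+1 /\ ~~ odd (Defs.total s %/ 2 ^ k).
  exists (Defs.total s); split; first lia.
  by rewrite divn_small // ltn_expl.
exact: (@merge_up_inv d T (Defs.total s) (Defs.total s).+1 0 (white s) [:: Some v] h1 h2 h3 h4).
Qed.

Lemma inv_delete (s : bwa T) i p v : Inv s -> active s i ->
  nth (VOID T) (white s i) p = Some v -> Inv (delete_at s i p).
Proof.
move=> hI ha hn.
have [hc h0] := cnt_void hn.
rewrite /delete_at; case: ifP => trig.
  case: i ha hn hc h0 trig => [|j] ha hn hc h0 trig.
    move=> k; rewrite /active /= VE.
    move: ha; rewrite /active expn0 divn1 => ha.
    have et : Defs.total s = (Defs.total s %/ 2) * 2 ^ 1 + 1 by rewrite expn1; lia.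
    have et' : (Defs.total s).-1 = (Defs.total s %/ 2) * 2 ^ 1 + 0 by rewrite expn1; lia.
    case: k => [|k]; first by rewrite expn0 divn1; lia.
    rewrite [white _]/= upd_other // upd_other // et' L1 // => hk.
    move: (hI k.+1); rewrite /active VE; apply.
    rewrite et L1; [exact: hk | done | done].
  have hV := key_V hI ha hn isT trig.
  move: hV; rewrite /= => hV.
  have [b1 b2 b3 b4] := bits_sub ha.
  move=> k; rewrite /demote /= /active /=.
  case hj: (odd (Defs.total s %/ 2 ^ j)) => /=.
  - rewrite VE /=.
    case: (ltngtP k j.+1) => hk.
    + case: (ltngtP k j) => hk'.
      * rewrite b1 // !upd_other; try (apply/eqP; lia).
        exact: (hI k).
      * lia.
      * by rewrite hk' b3 hj.
    + rewrite b2 // !upd_other; try (apply/eqP; lia).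
      exact: (hI k).
    + rewrite hk upd_same cnt_merge cnt_compact => _.
      move: hV; rewrite VE [white _]/= upd_same => ->.
      rewrite upd_other; last by apply/eqP; lia.
      have := hI j hj; rewrite VE expnS.
      have : 0 < 2 ^ j by rewrite expn_gt0.
      lia.
  - rewrite VE /=.
    case: (ltngtP k j.+1) => hk.
    + case: (ltngtP k j) => hk'.
      * rewrite b1 // !upd_other; try (apply/eqP; lia).
        exact: (hI k).
      * lia.
      * rewrite hk' upd_same cnt_compact => _.
        move: hV; rewrite VE [white _]/= upd_same => ->.
        have : 0 < 2 ^ j by rewrite expn_gt0.
        lia.
    + rewrite b2 // !upd_other; try (apply/eqP; lia).
      exact: (hI k).
    + by rewrite hk b4 hj.
move=> k; rewrite /active VE [white _]/=.
case: (@eqP _ k i) => [->|hki].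
  rewrite upd_same => _; move: trig; rewrite /demote_triggered VE [white _]/= upd_same hc.
  lia.
rewrite upd_other; last by apply/eqP.
exact: (hI k).
Qed.

Lemma inv_reach K (s : bwa T) : reachable K s -> Inv s.
Proof.
elim=> [|s' v _ IH _|s' i p v _ IH ha hn].
- exact: inv_empty.
- exact: inv_insert.
- exact: inv_delete IH ha hn.
Qed.

End S3.

Local Open Scope ring_scope.

Theorem mainTheorem3 (d : Order.disp_t) (T : orderType d) (K : nat) (s : bwa T)
    (i p : nat) (v : T) :
  reachable K s ->
  (0 < i)%N ->
  active s i ->
  nth (VOID T) (white s i) p = Some v ->
  let s1 := void_at s i p in
  demote_triggered s1 i ->
  let s2 := demote s1 i in
  (~~ active s1 i.-1 -> active s2 i.-1 /\ occupancy s2 i.-1 = 1) /\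
  (active s1 i.-1 -> active s2 i /\ occupancy s2 i > 3%:R / 4%:R).
Proof.
move=> hr hi ha hn s1 trig s2.
have hI := inv_reach hr.
have hV := key_V hI ha hn hi trig.
rewrite /s2 /s1 in trig hV *; clear s2 s1.
case: i hi ha hn trig hV => [//|j] _ ha hn trig hV /=.
have [b1 b2 b3 b4] := bits_sub ha.
have pe : (0 < 2 ^ j)%N by rewrite expn_gt0.
split.
- rewrite /active /= => hj.
  rewrite (negbTE hj); split.
  + by rewrite /= b3 hj.
  + rewrite /occupancy VE [white _]/= upd_same cnt_compact.
    move: hV; rewrite VE => ->.
    by rewrite divff // pnatr_eq0 -lt0n.
- rewrite /active /= => hj.
  rewrite hj; split.
  + by rewrite /= b4 hj.
  + rewrite /occupancy VE [white _]/= upd_same cnt_merge cnt_compact.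
    move: hV; rewrite VE => ->.
    rewrite [white _]/= upd_other; last by apply/eqP; lia.
    have := hI j hj; rewrite VE.
    set x := count _ _ => hx.
    have H : ((3 * (2 * 2 ^ j))%:R < (4 * (x + 2 ^ j))%:R :> rat).
      by rewrite ltr_nat; lia.
    rewrite ltr_pdivlMr; last by rewrite ltr0n expn_gt0.
    rewrite expnS natrD natrM.
    rewrite !natrM natrD in H.
    lra.
Qed.
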